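(* Let $G$ be a nonabelian group and let $\psi_1,\dots,\psi_t\in\operatorname{End}(G)$ satisfy $\psi_i([G,G])\le Z(G)$ for all $i$ and $[\psi_i(G),\psi_j(G)]\subseteq Z(G)$ for all $1\le i,j\le t$. Fix $1\le i,j\le t$ and $\alpha,\beta\in\mathscr{E}$, and write $\circ_i=\circ_{\psi_i,\alpha}$, $\circ_j=\circ_{\psi_j,\beta}$. For $g\in G$ let $\widetilde g$ be the inverse of $g$ in $(G,\circ_i)$ and $\overline g$ the inverse of $g$ in $(G,\circ_j)$. Then \[R(g,h)=\Big(\widetilde g\circ_i(g\circ_j h),\ \overline{\widetilde g\circ_i(g\circ_j h)}\circ_j g\circ_j h\Big),\qquad R'(g,h)=\Big((g\circ_j h)\circ_i\widetilde g,\ \overline{(g\circ_j h)\circ_i\widetilde g}\circ_j g\circ_j h\Big)\] are mutually inverse non-degenerate set-theoretic solutions to the Yang–Baxter equation on $G$. Furthermore, $R$ is involutive (and hence $R'=R$) if and only if $(G,\circ_i)$ is abelian.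
   Context: $Z(G)$ is the center and $[G,G]$ the commutator subgroup. $\mathscr{E}$ denotes the set of formal expressions $\alpha=n_1\phi_1+\cdots+n_s\phi_s$ with $n_k\in\mathbb Z$, $\phi_k\in\operatorname{End}(G)$ (free group on $\operatorname{End}(G)$, written additively), acting on $G$ by $\alpha(g)=\phi_1(g^{n_1})\cdots\phi_s(g^{n_s})$. For $\psi\in\operatorname{End}(G)$ and $\alpha\in\mathscr{E}$, $g\circ_{\psi,\alpha}h=g\,\psi(\alpha(g))\,h\,\psi(\alpha(g))^{-1}$; these are group operations on $G$. A set-theoretic solution to the Yang–Baxter equation on a set $X$ is a map $R:X\times X\to X\times X$ with $(R\times\mathrm{id})(\mathrm{id}\times R)(R\times\mathrm{id})=(\mathrm{id}\times R)(R\times\mathrm{id})(\mathrm{id}\times R)$ on $X^3$; it is non-degenerate if, writing $R(x,y)=(\sigma_x(y),\tau_y(x))$, all maps $\sigma_x$ and $\tau_y$ are bijections; it is involutive if $R^2=\mathrm{id}$. *)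

(* Defs.v *)
From mathcomp Require Import all_boot.
From Stdlib Require Import ZArith List ClassicalEpsilon.
Local Open Scope nat_scope.

Set Implicit Arguments.
Unset Strict Implicit.
Unset Printing Implicit Defensive.

Section GroupDefs.
Variables (G : Type) (mul : G -> G -> G) (e : G) (inv : G -> G).

Definition is_group : Prop :=
  [/\ (forall x y z, mul x (mul y z) = mul (mul x y) z),
      (forall x, mul e x = x /\ mul x e = x) &
      (forall x, mul (inv x) x = e /\ mul x (inv x) = e)].

Definition is_abelian_op (op : G -> G -> G) : Prop := forall x y, op x y = op y x.

Definition is_endo (f : G -> G) : Prop := forall x y, f (mul x y) = mul (f x) (f y).

Definition central (z : G) : Prop := forall x, mul z x = mul x z.

Definition commg (x y : G) : G := mul (mul (inv x) (inv y)) (mul x y).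

(* [A,B]: the subgroup generated by the commutators [a,b], a in A, b in B,
   i.e. finite products of such commutators and their inverses. *)
Inductive comm_sub (A B : G -> Prop) : G -> Prop :=
  | cs_one : comm_sub A B e
  | cs_comm a b z : A a -> B b -> comm_sub A B z -> comm_sub A B (mul (commg a b) z)
  | cs_commV a b z : A a -> B b -> comm_sub A B z ->
                     comm_sub A B (mul (inv (commg a b)) z).

Definition derived : G -> Prop := comm_sub (fun _ => True) (fun _ => True).

Definition image_of (f : G -> G) : G -> Prop := fun y => exists x, y = f x.

Definition zpow (g : G) (n : Z) : G :=
  match n with
  | Z0 => e
  | Zpos p => ssrnat.iter (Pos.to_nat p)%nat (mul g) e
  | Zneg p => inv (ssrnat.iter (Pos.to_nat p)%nat (mul g) e)
  end.

(* Formal expressions alpha = n_1 phi_1 + ... + n_s phi_s, represented as the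
   list of pairs (n_k, phi_k); well-formed when every phi_k is an endomorphism. *)
Definition expr := list (Z * (G -> G)).
Definition expr_wf (a : expr) : Prop := forall p, In p a -> is_endo p.2.

Definition expr_act (a : expr) (g : G) : G :=
  fold_right (fun p acc => mul (p.2 (zpow g p.1)) acc) e a.

Definition circ (psi : G -> G) (a : expr) (g h : G) : G :=
  mul (mul (mul g (psi (expr_act a g))) h) (inv (psi (expr_act a g))).

Definition op_inv (op : G -> G -> G) (g : G) : G :=
  epsilon (inhabits e) (fun h => op g h = e /\ op h g = e).

End GroupDefs.

Section YBE.
Variable X : Type.
Definition R12 (R : X * X -> X * X) (t : X * X * X) : X * X * X :=
  let '(x, y, z) := t in let '(a, b) := R (x, y) in (a, b, z).
Definition R23 (R : X * X -> X * X) (t : X * X * X) : X * X * X :=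
  let '(x, y, z) := t in let '(a, b) := R (y, z) in (x, a, b).
Definition is_YBE_solution (R : X * X -> X * X) : Prop :=
  forall t, R12 R (R23 R (R12 R t)) = R23 R (R12 R (R23 R t)).
Definition non_degenerate (R : X * X -> X * X) : Prop :=
  (forall x, bijective (fun y => (R (x, y)).1)) /\
  (forall y, bijective (fun x => (R (x, y)).2)).
Definition involutive_sol (R : X * X -> X * X) : Prop := forall p, R (R p) = p.
End YBE.

(* Main.v *)
Require Import Defs.
From mathcomp Require Import all_boot.
From Stdlib Require Import ZArith List FunctionalExtensionality Setoid Morphisms RelationClasses.

Section Brace.
Variables (B : Type) (z : B) (add : B -> B -> B) (neg : B -> B)
  (o : B -> B -> B) (ci : B -> B).
Hypothesis addA : forall a b c, add a (add b c) = add (add a b) c.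
Hypothesis add0l : forall a, add z a = a.
Hypothesis add0r : forall a, add a z = a.
Hypothesis addNl : forall a, add (neg a) a = z.
Hypothesis addNr : forall a, add a (neg a) = z.
Hypothesis oA : forall a b c, o a (o b c) = o (o a b) c.
Hypothesis o0l : forall a, o z a = a.
Hypothesis o0r : forall a, o a z = a.
Hypothesis oVl : forall a, o (ci a) a = z.
Hypothesis oVr : forall a, o a (ci a) = z.
Hypothesis brace : forall a b c, o a (add b c) = add (o a b) (add (neg a) (o a c)).

Definition lam a b := add (neg a) (o a b).
Definition tau b a := o (o (ci (lam a b)) a) b.
Definition Rb := fun p : B * B =>
  let '(g, h) := p in let u := add (neg g) (o g h) in (u, o (o (ci u) g) h).
Lemma Rb_eq a b : Rb (a, b) = (lam a b, tau b a). Proof. by []. Qed.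

Lemma addKl a b : add (neg a) (add a b) = b.
Proof. by rewrite addA addNl add0l. Qed.
Lemma addKr a b : add a (add (neg a) b) = b.
Proof. by rewrite addA addNr add0l. Qed.
Lemma add_negE u v : add u v = z -> v = neg u.
Proof. by move=> H; rewrite -(addKl u v) H add0r. Qed.
Lemma add_negE' u v : add u v = z -> u = neg v.
Proof. move=> H; by rewrite -(add0l (neg v)) -H -addA addNr add0r. Qed.
Lemma negK a : neg (neg a) = a.
Proof. by rewrite -(add_negE _ _ (addNl a)). Qed.
Lemma negD a b : neg (add a b) = add (neg b) (neg a).
Proof. symmetry; apply: add_negE; by rewrite -addA addKr addNr. Qed.
Lemma neg0 : neg z = z.
Proof. by rewrite -(add_negE _ _ (add0l z)). Qed.

Lemma oKl a b : o (ci a) (o a b) = b.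
Proof. by rewrite oA oVl o0l. Qed.
Lemma oKr a b : o a (o (ci a) b) = b.
Proof. by rewrite oA oVr o0l. Qed.
Lemma o_ciE u v : o u v = z -> v = ci u.
Proof. by move=> H; rewrite -(oKl u v) H o0r. Qed.
Lemma o_ciE' u v : o u v = z -> u = ci v.
Proof. move=> H; by rewrite -(o0l (ci v)) -H -oA oVr o0r. Qed.
Lemma ciK a : ci (ci a) = a.
Proof. by rewrite -(o_ciE _ _ (oVl a)). Qed.
Lemma ciD a b : ci (o a b) = o (ci b) (ci a).
Proof. symmetry; apply: o_ciE; by rewrite -oA oKr oVr. Qed.
Lemma ci0 : ci z = z.
Proof. by rewrite -(o_ciE _ _ (o0l z)). Qed.
Lemma o_inj a x y : o a x = o a y -> x = y.
Proof. by move=> H; rewrite -(oKl a x) H oKl. Qed.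

Lemma lam0r a : lam a z = z.
Proof. by rewrite /lam o0r addNl. Qed.
Lemma lam0l b : lam z b = b.
Proof. by rewrite /lam neg0 o0l add0l. Qed.
Lemma lamD a b c : lam a (add b c) = add (lam a b) (lam a c).
Proof. by rewrite /lam brace !addA. Qed.
Lemma lamN a b : lam a (neg b) = neg (lam a b).
Proof. apply: add_negE; by rewrite -lamD addNr lam0r. Qed.
Lemma lamM a b c : lam (o a b) c = lam a (lam b c).
Proof.
rewrite [lam b c]/lam lamD lamN /lam negD negK -oA.
by rewrite -addA addKr.
Qed.
Lemma lam_ci a b : lam (ci a) (lam a b) = b.
Proof. by rewrite -lamM oVl lam0l. Qed.
Lemma lam_ci' a b : lam a (lam (ci a) b) = b.
Proof. by rewrite -lamM oVr lam0l. Qed.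
Lemma lam_inj a x y : lam a x = lam a y -> x = y.
Proof. by move=> H; rewrite -(lam_ci a x) H lam_ci. Qed.
Lemma o_lam a b : o a b = add a (lam a b).
Proof. by rewrite /lam addKr. Qed.
Lemma prod_tau a b : o (lam a b) (tau b a) = o a b.
Proof. by rewrite /tau !oA oVr o0l. Qed.
Lemma tau_lam a b :
  lam (lam a b) (tau b a) = add (neg (lam a b)) (add a (lam a b)).
Proof. by rewrite {1}/lam prod_tau o_lam. Qed.

Lemma ybe1 a b c : lam (lam a b) (lam (tau b a) c) = lam a (lam b c).
Proof. by rewrite -lamM prod_tau lamM. Qed.

Lemma ybe2 a b c :
  tau (lam (tau b a) c) (lam a b) = lam (tau (lam b c) a) (tau c b).
Proof.
apply: (lam_inj (lam a (lam b c))).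
rewrite -{1}ybe1 tau_lam !ybe1.
rewrite -[in RHS]lamM ?prod_tau lamM tau_lam lamD lamN lamD.
by [].
Qed.

Lemma ybe3 a b c :
  tau c (tau b a) = tau (tau c b) (tau (lam b c) a).
Proof.
have hL : o (o (lam (lam a b) (lam (tau b a) c)) (tau (lam (tau b a) c) (lam a b)))
    (tau c (tau b a)) = o (o a b) c.
  by rewrite prod_tau -oA prod_tau oA prod_tau.
have hR : o (o (lam a (lam b c)) (lam (tau (lam b c) a) (tau c b)))
    (tau (tau c b) (tau (lam b c) a)) = o a (o b c).
  by rewrite -oA (prod_tau (tau (lam b c) a)) oA prod_tau -oA prod_tau.
apply: (o_inj (o (lam a (lam b c)) (lam (tau (lam b c) a) (tau c b)))).
by rewrite hR -ybe1 -ybe2 hL oA.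
Qed.

Lemma ybe : is_YBE_solution Rb.
Proof.
move=> [[a b] c]; rewrite /R12 /R23.
do 3 (rewrite ?Rb_eq; cbv beta iota zeta).
by rewrite ybe1 ybe2 ybe3.
Qed.


Lemma o_neg a b : o a (neg b) = add a (add (neg (o a b)) a).
Proof.
have H : o a (add b (neg b)) = a by rewrite addNr o0r.
rewrite brace in H.
have H2 := f_equal (add (neg (o a b))) H; rewrite addKl in H2.
by rewrite -H2 addKr.
Qed.

Definition tinv b w := o (ci (add (ci w) (ci b))) (ci b).

Lemma tauK1 b w : tau b (tinv b w) = w.
Proof.
rewrite /tinv; set X := ci (add (ci w) (ci b)).
have H : o X (add (ci w) (ci b)) = z by rewrite /X oVl.
rewrite brace addA in H.
have H2 := add_negE' _ _ H.
have E : o (o X (ci b)) b = X by rewrite -oA oVl o0r.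
rewrite /tau /lam E -H2 -addA addNl add0r -oA E ciD ciK -oA oVl o0r.
by [].
Qed.

Lemma tauK2 b a : tinv b (tau b a) = a.
Proof.
rewrite /tinv /tau ciD ciD ciK.
set s := lam a b.
have Hs : add (o (ci b) (o (ci a) s)) (ci b) = o (ci b) (ci a).
  rewrite oA /s /lam brace o_neg.
  have -> : o (o (ci b) (ci a)) (o a b) = z by rewrite -oA oKl oVl.
  have -> : o (o (ci b) (ci a)) a = ci b by rewrite -oA oVl o0r.
  rewrite add0r.
  set Q := o (ci b) (ci a).
  by rewrite -!addA addKr addNl add0r.
by rewrite Hs ciD !ciK -oA oVr o0r.
Qed.

Lemma nondeg : non_degenerate Rb.
Proof.
split.
- move=> x; exists (lam (ci x)) => y; rewrite Rb_eq /=.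
    exact: lam_ci.
  exact: lam_ci'.
- move=> y; exists (tinv y) => x; rewrite Rb_eq /=.
    exact: tauK2.
  exact: tauK1.
Qed.

Definition Rb' := fun p : B * B =>
  let '(g, h) := p in let u := add (o g h) (neg g) in (u, o (o (ci u) g) h).

Lemma RR' p : Rb (Rb' p) = p.
Proof.
case: p => a b /=.
have E : add (neg (add (o a b) (neg a))) (o (add (o a b) (neg a)) (o (o (ci (add (o a b) (neg a))) a) b)) = a.
  by rewrite -!oA oKr negD negK -addA addNl add0r.
rewrite E; congr (_, _).
by rewrite -!oA oKr oKl.
Qed.

Lemma R'R p : Rb' (Rb p) = p.
Proof.
case: p => a b /=.
have E : add (o (add (neg a) (o a b)) (o (o (ci (add (neg a) (o a b))) a) b)) (neg (add (neg a) (o a b))) = a.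
  by rewrite -!oA oKr negD negK addA addNr add0l.
rewrite E; congr (_, _).
by rewrite -!oA oKr oKl.
Qed.

Lemma invol_iff : involutive_sol Rb <-> (forall x y, add x y = add y x).
Proof.
split.
- move=> H x y.
  have := f_equal fst (H (x, o (ci x) y)).
  rewrite Rb_eq [Rb _]Rb_eq /= tau_lam /lam oKr.
  move=> E; rewrite addKr negD negK in E.
  have E2 := f_equal (add y) E; rewrite -addA addKr in E2; exact E2.
- move=> C [a b]; rewrite Rb_eq Rb_eq.
  have E : lam (lam a b) (tau b a) = a.
    by rewrite tau_lam (C a) addKl.
  rewrite E /tau E; congr (_, _).
  by rewrite -!oA oKr oKl.
Qed.

Lemma R'_eq_R : involutive_sol Rb -> Rb' = Rb.
Proof.
move=> H.
apply: FunctionalExtensionality.functional_extensionality => p.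
by rewrite -{1}(H p) R'R.
Qed.

Lemma ybe_nd : is_YBE_solution Rb /\ non_degenerate Rb.
Proof using All. split; [exact: ybe | exact: nondeg]. Qed.

Lemma rest_props :
  ((forall p, Rb (Rb' p) = p) /\ (forall p, Rb' (Rb p) = p)) /\
  (involutive_sol Rb <-> (forall x y, add x y = add y x)) /\
  (involutive_sol Rb -> Rb' = Rb).
Proof using All.
split; [split; [exact: RR' | exact: R'R] | split; [exact: invol_iff | exact: R'_eq_R]].
Qed.
End Brace.

Lemma brace_main (B : Type) (z : B) (add : B -> B -> B) (neg : B -> B)
  (o : B -> B -> B) (ci : B -> B)
  (addA : forall a b c, add a (add b c) = add (add a b) c)
  (add0l : forall a, add z a = a)
  (add0r : forall a, add a z = a)
  (addNl : forall a, add (neg a) a = z)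
  (addNr : forall a, add a (neg a) = z)
  (oA : forall a b c, o a (o b c) = o (o a b) c)
  (o0l : forall a, o z a = a)
  (o0r : forall a, o a z = a)
  (oVl : forall a, o (ci a) a = z)
  (oVr : forall a, o a (ci a) = z)
  (brace : forall a b c, o a (add b c) = add (o a b) (add (neg a) (o a c))) :
  let R := Rb B add neg o ci in let R' := Rb' B add neg o ci in
  (is_YBE_solution R /\ is_YBE_solution R') /\
  (non_degenerate R /\ non_degenerate R') /\
  ((forall p, R (R' p) = p) /\ (forall p, R' (R p) = p)) /\
  (involutive_sol R <-> (forall x y, add x y = add y x)) /\
  (involutive_sol R -> R' = R).
Proof.
move=> R R'.
have [Y1 N1] := ybe_nd B z add neg o ci addA add0l add0r addNl addNr oA o0l o0r oVl oVr brace.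
have [Y2 N2] : is_YBE_solution R' /\ non_degenerate R'.
  apply: (@ybe_nd B z (fun x y => add y x) neg o ci) => //.
  by move=> a b c /=; rewrite brace !addA.
have [HA [HB HC]] := rest_props B z add neg o ci addA add0l add0r addNl addNr oA o0l o0r oVl oVr brace.
by split; [split | split; [split | split]].
Qed.

Set Implicit Arguments.
Unset Strict Implicit.

Section Grp.
Variables (G : Type) (mul : G -> G -> G) (e : G) (inv : G -> G).
Hypothesis HG : is_group mul e inv.

Lemma mulA x y z : mul x (mul y z) = mul (mul x y) z.
Proof. by case: HG. Qed.
Lemma mul1g x : mul e x = x.
Proof. by case: HG => _ H _; case: (H x). Qed.
Lemma mulg1 x : mul x e = x.
Proof. by case: HG => _ H _; case: (H x). Qed.
Lemma mulVg x : mul (inv x) x = e.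
Proof. by case: HG => _ _ H; case: (H x). Qed.
Lemma mulgV x : mul x (inv x) = e.
Proof. by case: HG => _ _ H; case: (H x). Qed.
Lemma mulKg x y : mul (inv x) (mul x y) = y.
Proof. by rewrite mulA mulVg mul1g. Qed.
Lemma mulKVg x y : mul x (mul (inv x) y) = y.
Proof. by rewrite mulA mulgV mul1g. Qed.
Lemma mulgK x y : mul (mul x y) (inv y) = x.
Proof. by rewrite -mulA mulgV mulg1. Qed.
Lemma mulgKV x y : mul (mul x (inv y)) y = x.
Proof. by rewrite -mulA mulVg mulg1. Qed.
Lemma inv_uniq x y : mul x y = e -> y = inv x.
Proof. by move=> H; rewrite -(mulKg x y) H mulg1. Qed.
Lemma invK x : inv (inv x) = x.
Proof. by rewrite -(inv_uniq (mulVg x)). Qed.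
Lemma invM x y : inv (mul x y) = mul (inv y) (inv x).
Proof. symmetry; apply: inv_uniq; by rewrite -mulA mulKVg mulgV. Qed.
Lemma inv1 : inv e = e.
Proof. by rewrite -(inv_uniq (mul1g e)). Qed.
Lemma mul_injl a x y : mul a x = mul a y -> x = y.
Proof. by move=> H; rewrite -(mulKg a x) H mulKg. Qed.

Definition cent z := central mul z.
Lemma cent_e : cent e.
Proof. by move=> x; rewrite mul1g mulg1. Qed.
Lemma cent_mul a b : cent a -> cent b -> cent (mul a b).
Proof. by move=> Ha Hb x; rewrite -mulA Hb mulA Ha mulA. Qed.
Lemma cent_inv a : cent a -> cent (inv a).
Proof.
move=> Ha x; apply: (@mul_injl a); by rewrite mulKVg mulA Ha mulgK.
Qed.

Definition ce x y := cent (mul (inv x) y).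
Lemma ce_refl x : ce x x.
Proof. rewrite /ce mulVg; exact: cent_e. Qed.
Lemma ce_sym x y : ce x y -> ce y x.
Proof. by move=> H; have := cent_inv H; rewrite invM invK. Qed.
Lemma ce_trans x y z : ce x y -> ce y z -> ce x z.
Proof.
move=> H1 H2; have := cent_mul H1 H2; rewrite -mulA mulKVg; done.
Qed.
Lemma ce_mul x x' y y' : ce x x' -> ce y y' -> ce (mul x y) (mul x' y').
Proof.
move=> H1 H2; rewrite /ce invM.
have -> : mul (mul (inv y) (inv x)) (mul x' y') =
          mul (mul (inv y) (mul (inv x) x')) y' by rewrite !mulA.
rewrite -H1 -mulA; exact: cent_mul.
Qed.
Lemma conjC x C : cent C -> mul x (mul C (inv x)) = C.
Proof. by move=> Hc; rewrite Hc mulKVg. Qed.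
Lemma ce_inv x y : ce x y -> ce (inv x) (inv y).
Proof.
move=> H; rewrite /ce invK.
have Hc := cent_inv H.
have -> : mul x (inv y) = mul x (mul (inv (mul (inv x) y)) (inv x)).
  by rewrite invM invK -!mulA mulgV mulg1.
by rewrite (conjC _ Hc).
Qed.

#[local] Instance ce_Equiv : Equivalence ce.
Proof. split; [exact: ce_refl | exact: ce_sym | exact: ce_trans]. Qed.
#[local] Instance mul_Proper : Proper (ce ==> ce ==> ce) mul.
Proof. move=> x x' H y y' H2; exact: ce_mul. Qed.
#[local] Instance inv_Proper : Proper (ce ==> ce) inv.
Proof. move=> x y H; exact: ce_inv. Qed.

Lemma eq_ce x y : x = y -> ce x y.
Proof. by move=> ->; reflexivity. Qed.
Lemma cent_ce z x : cent z -> ce (mul x z) x.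
Proof. by move=> H; rewrite /ce invM -mulA mulVg mulg1; apply: cent_inv. Qed.
Lemma ce_e_cent z : ce z e -> cent z.
Proof. by move=> H; move: (cent_inv H); rewrite mulg1 invK. Qed.

Lemma cjE u v k : ce u v -> mul (mul u k) (inv u) = mul (mul v k) (inv v).
Proof.
move=> Hc; rewrite /ce /cent /central in Hc.
have -> : v = mul u (mul (inv u) v) by rewrite mulKVg.
set C := mul (inv u) v in Hc *; clearbody C.
have E1 : mul (mul u C) k = mul (mul u k) C by rewrite -!mulA Hc.
by rewrite E1 invM -[mul (mul (mul u k) C) _]mulA mulKVg.
Qed.

Definition cm x y := ce (mul x y) (mul y x).
Lemma cm_sym x y : cm x y -> cm y x.
Proof. exact: ce_sym. Qed.
Lemma cm_e y : cm e y.
Proof. rewrite /cm mul1g mulg1; reflexivity. Qed.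
Lemma cm_mull x x' y : cm x y -> cm x' y -> cm (mul x x') y.
Proof.
rewrite /cm => H1 H2; rewrite -mulA; setoid_rewrite H2.
rewrite mulA; setoid_rewrite H1; rewrite -mulA; reflexivity.
Qed.
Lemma cm_iter a b n : cm a b -> cm (ssrnat.iter n (mul a) e) b.
Proof.
move=> H; elim: n => [|n IH] /=; first exact: cm_e.
exact: cm_mull.
Qed.
Lemma iter_mul_ce a b n : cm a b ->
  ce (ssrnat.iter n (mul (mul a b)) e) (mul (ssrnat.iter n (mul a) e) (ssrnat.iter n (mul b) e)).
Proof.
move=> H; elim: n => [|n IH] /=; first by rewrite mulg1; reflexivity.
setoid_rewrite IH; rewrite -!mulA (mulA b).
have H2 := cm_sym (cm_iter n H).
rewrite /cm in H2; setoid_rewrite H2; rewrite -!mulA; reflexivity.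
Qed.
Lemma zpow_mul_ce a b n : cm a b ->
  ce (zpow mul e inv (mul a b) n) (mul (zpow mul e inv a n) (zpow mul e inv b n)).
Proof.
move=> H; case: n => [|p|p] /=.
- rewrite mulg1; reflexivity.
- exact: iter_mul_ce.
- setoid_rewrite (iter_mul_ce _ H); rewrite invM.
  have H2 := ce_inv (cm_iter (Pos.to_nat p) (cm_sym (cm_iter (Pos.to_nat p) H))).
  rewrite !invM in H2; exact: ce_sym H2.
Qed.
Lemma zpow_ce a b n : ce a b -> ce (zpow mul e inv a n) (zpow mul e inv b n).
Proof.
have It : forall m, ce a b -> ce (ssrnat.iter m (mul a) e) (ssrnat.iter m (mul b) e).
  move=> m H; elim: m => [|m IH] /=; first reflexivity.
  exact: ce_mul.
move=> H; case: n => [|p|p] /=; [reflexivity | exact: It | ].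
setoid_rewrite (It _ H); reflexivity.
Qed.

Section Twist.
Variable c : G -> G.
Hypothesis c_e : c e = e.
Hypothesis c_mul : forall x y, ce (c (mul x y)) (mul (c x) (c y)).
Hypothesis c_cm : forall x y, cm (c x) (c y).

Definition top x y := mul (mul (mul x (c x)) y) (inv (c x)).
Lemma top_conj x y : top x y = mul x (mul (mul (c x) y) (inv (c x))).
Proof. by rewrite /top !mulA. Qed.

Lemma c_conj u x : ce (c (mul (mul u x) (inv u))) (c x).
Proof.
setoid_rewrite c_mul; setoid_rewrite c_mul.
have H := c_cm u x; rewrite /cm in H; setoid_rewrite H.
rewrite -mulA; setoid_rewrite <- (c_mul u (inv u)); rewrite mulgV c_e mulg1; reflexivity.
Qed.

Lemma c_top x y : ce (c (top x y)) (mul (c x) (c y)).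
Proof. rewrite top_conj; setoid_rewrite c_mul; setoid_rewrite c_conj; reflexivity. Qed.

Lemma top_assoc x y z : top x (top y z) = top (top x y) z.
Proof.
rewrite [top (top x y) z]top_conj (cjE z (c_top x y)).
rewrite !top_conj !invM -!mulA mulKg; done.
Qed.

Lemma top1l y : top e y = y.
Proof. by rewrite /top c_e inv1 !mulg1 mul1g. Qed.
Lemma top1r x : top x e = x.
Proof. by rewrite /top mulg1 mulgK. Qed.

Definition tinvG x := mul (mul (inv (c x)) (inv x)) (c x).
Lemma top_tinv_r x : top x (tinvG x) = e.
Proof. by rewrite top_conj /tinvG -!mulA mulKVg mulKVg mulgV. Qed.
Lemma c_tinv x : ce (c (tinvG x)) (inv (c x)).
Proof.
have H := c_top x (tinvG x); rewrite top_tinv_r c_e in H.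
transitivity (mul (inv (c x)) (mul (c x) (c (tinvG x)))).
  rewrite mulKg; reflexivity.
setoid_rewrite <- H; rewrite mulg1; reflexivity.
Qed.
Lemma top_tinv_l x : top (tinvG x) x = e.
Proof.
rewrite top_conj (cjE x (c_tinv x)) /tinvG invK.
by rewrite -!mulA mulKVg mulKg mulVg.
Qed.

Lemma op_inv_spec g :
  top g (op_inv e top g) = e /\ top (op_inv e top g) g = e.
Proof.
rewrite /op_inv; apply: (ClassicalEpsilon.epsilon_spec (inhabits e) (fun h => top g h = e /\ top h g = e)); exists (tinvG g).
by rewrite top_tinv_r top_tinv_l.
Qed.

Lemma top_inv_apply g y :
  top (op_inv e top g) y = mul (mul (inv (c g)) (mul (inv g) y)) (c g).
Proof.
set w := mul (mul (inv (c g)) (mul (inv g) y)) (c g).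
have E : top g w = y.
  by rewrite top_conj /w -!mulA mulKVg mulKVg mulgV mulg1.
rewrite -{1}E top_assoc; case: (op_inv_spec g) => _ ->; exact: top1l.
Qed.
End Twist.

Section TwoTwist.
Variables c d : G -> G.
Hypothesis c_e : c e = e.
Hypothesis c_mul : forall x y, ce (c (mul x y)) (mul (c x) (c y)).
Hypothesis c_cm : forall x y, cm (c x) (c y).
Hypothesis cross : forall x y, cm (d x) (c y).

Lemma brace_cd g h k :
  top d g (top c h k) =
  top c (top d g h) (top c (op_inv e (top c) g) (top d g k)).
Proof.
rewrite (top_inv_apply c_e c_mul c_cm g) [top d g k]top_conj mulKg.
set P := top d g h.
have cP : ce (c P) (mul (c g) (c h)).
  rewrite /P top_conj; setoid_rewrite c_mul; setoid_rewrite (c_conj c_e c_mul c_cm).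
  reflexivity.
set V := mul (mul (inv (d g)) (c P)) (mul (inv (c g)) (d g)).
have HV : ce V (c h).
  rewrite /V; setoid_rewrite cP.
  have Hc := c_cm g h; rewrite /cm in Hc; setoid_rewrite Hc.
  rewrite -!mulA mulKVg.
  have Hx := cross g h; rewrite /cm in Hx; setoid_rewrite <- Hx.
  rewrite mulKg; reflexivity.
have EcP : c P = mul (mul (d g) (mul V (inv (d g)))) (c g).
  by rewrite /V -!mulA !mulKVg mulVg mulg1.
rewrite [top c P _]top_conj EcP; clearbody V.
have E2 : forall Y : G, mul (mul (mul (mul (d g) (mul V (inv (d g)))) (c g))
          (mul (mul (inv (c g)) (mul (mul (d g) Y) (inv (d g)))) (c g)))
       (inv (mul (mul (d g) (mul V (inv (d g)))) (c g))) =
     mul (mul (d g) (mul (mul V Y) (inv V))) (inv (d g)).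
  by move=> Y; rewrite !invM invK -!mulA !mulKVg !mulKg.
rewrite E2 (cjE k HV) /P !top_conj -!mulA mulKg.
done.
Qed.
End TwoTwist.

Lemma endo_e f : is_endo mul f -> f e = e.
Proof.
move=> Hf; apply: (@mul_injl (f e)); by rewrite -Hf !mulg1.
Qed.
Lemma endo_inv f x : is_endo mul f -> f (inv x) = inv (f x).
Proof.
move=> Hf; apply: inv_uniq; by rewrite -Hf mulgV endo_e.
Qed.
Lemma endo_zpow f x n : is_endo mul f ->
  f (zpow mul e inv x n) = zpow mul e inv (f x) n.
Proof.
move=> Hf.
have It : forall m, f (ssrnat.iter m (mul x) e) = ssrnat.iter m (mul (f x)) e.
  elim=> [|m IH] /=; [exact: endo_e | by rewrite Hf IH].
case: n => [|p|p] /=; [exact: endo_e | exact: It | by rewrite endo_inv // It].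
Qed.
Lemma zpow_e n : zpow mul e inv e n = e.
Proof.
have It : forall m, ssrnat.iter m (mul e) e = e.
  by elim=> [|m IH] //=; rewrite IH mulg1.
by case: n => [|p|p] //=; rewrite It // inv1.
Qed.

Section Endo.
Variable psi : G -> G.
Hypothesis psi_endo : is_endo mul psi.
Hypothesis psi_cm : forall a b, cm (psi a) (psi b).

Lemma expr_e l : expr_wf mul l -> expr_act mul e inv l e = e.
Proof.
elim: l => [|p l IH] Hw //=.
rewrite zpow_e endo_e ?mul1g; last by apply: Hw; left.
by apply: IH => q Hq; apply: Hw; right.
Qed.

Lemma cpsi_e l : expr_wf mul l -> psi (expr_act mul e inv l e) = e.
Proof. by move=> Hw; rewrite expr_e // endo_e. Qed.

Lemma cpsi_cm l x y : cm (psi (expr_act mul e inv l x)) (psi (expr_act mul e inv l y)).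
Proof. exact: psi_cm. Qed.

Lemma cpsi_mul l x y : expr_wf mul l ->
  ce (psi (expr_act mul e inv l (mul x y)))
     (mul (psi (expr_act mul e inv l x)) (psi (expr_act mul e inv l y))).
Proof.
elim: l => [|[n phi] l IH] Hw /=.
  rewrite endo_e // mulg1; reflexivity.
have Hphi : is_endo mul phi by apply: (Hw (n, phi)); left.
have Hl : expr_wf mul l by move=> q Hq; apply: Hw; right.
rewrite !psi_endo.
rewrite (endo_zpow _ _ Hphi) (endo_zpow _ _ psi_endo) Hphi psi_endo.
setoid_rewrite (zpow_mul_ce n (psi_cm (phi x) (phi y))).
setoid_rewrite (IH Hl).
rewrite -!(endo_zpow _ _ psi_endo) -!(endo_zpow _ _ Hphi).
rewrite -!mulA (mulA (psi (phi (zpow mul e inv y n)))).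
have H := psi_cm (phi (zpow mul e inv y n)) (expr_act mul e inv l x).
rewrite /cm in H; setoid_rewrite H; rewrite -!mulA; reflexivity.
Qed.
End Endo.

End Grp.

Theorem corollary3p5
  (G : Type) (mul : G -> G -> G) (e : G) (inv : G -> G)
  (HG : is_group mul e inv)
  (Hnonab : ~ is_abelian_op mul)
  (t : nat) (psi : 'I_t -> G -> G)
  (Hpsi_endo : forall k, is_endo mul (psi k))
  (Hpsi_der : forall k x, derived mul e inv x -> central mul (psi k x))
  (Hpsi_comm : forall k l x,
      comm_sub mul e inv (image_of (psi k)) (image_of (psi l)) x -> central mul x)
  (i j : 'I_t) (alpha beta : expr G)
  (Halpha : expr_wf mul alpha) (Hbeta : expr_wf mul beta) :
  let oi := circ mul e inv (psi i) alpha in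
  let oj := circ mul e inv (psi j) beta in
  let tl := op_inv e oi in
  let bar := op_inv e oj in
  let R := fun p : G * G =>
    let '(g, h) := p in
    let u := oi (tl g) (oj g h) in (u, oj (oj (bar u) g) h) in
  let R' := fun p : G * G =>
    let '(g, h) := p in
    let u := oi (oj g h) (tl g) in (u, oj (oj (bar u) g) h) in
  (is_YBE_solution R /\ is_YBE_solution R') /\
  (non_degenerate R /\ non_degenerate R') /\
  ((forall p, R (R' p) = p) /\ (forall p, R' (R p) = p)) /\
  (involutive_sol R <-> is_abelian_op oi) /\
  (involutive_sol R -> R' = R).
Proof.
move=> oi oj tl bar R R'.
have Pcm : forall k l a b, cm mul inv (psi k a) (psi l b).
  move=> k l a b; rewrite /cm /ce (invM HG).
  have := Hpsi_comm l k (Defs.commg mul inv (psi l b) (psi k a)).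
  rewrite /Defs.commg; apply.
  have H := @cs_comm G mul e inv (image_of (psi l)) (image_of (psi k)) (psi l b) (psi k a) e
    (ex_intro _ b erefl) (ex_intro _ a erefl) (@cs_one G mul e inv _ _).
  by rewrite (mulg1 HG) in H.
pose c := fun g => psi i (expr_act mul e inv alpha g).
pose d := fun g => psi j (expr_act mul e inv beta g).
have c_e : c e = e by exact: (cpsi_e HG (Hpsi_endo i) Halpha).
have d_e : d e = e by exact: (cpsi_e HG (Hpsi_endo j) Hbeta).
have c_mul : forall x y, ce mul inv (c (mul x y)) (mul (c x) (c y)).
  move=> x y; exact: (cpsi_mul HG (Hpsi_endo i) (Pcm i i) x y Halpha).
have d_mul : forall x y, ce mul inv (d (mul x y)) (mul (d x) (d y)).
  move=> x y; exact: (cpsi_mul HG (Hpsi_endo j) (Pcm j j) x y Hbeta).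
have c_cm : forall x y, cm mul inv (c x) (c y) by move=> x y; exact: Pcm.
have d_cm : forall x y, cm mul inv (d x) (d y) by move=> x y; exact: Pcm.
have cross : forall x y, cm mul inv (d x) (c y) by move=> x y; exact: Pcm.
have := @brace_main G e oi tl oj bar
  (fun a b c0 => top_assoc HG c_e c_mul c_cm a b c0)
  (top1l HG c_e) (top1r HG c)
  (fun a => proj2 (op_inv_spec HG c_e c_mul c_cm a))
  (fun a => proj1 (op_inv_spec HG c_e c_mul c_cm a))
  (fun a b c0 => top_assoc HG d_e d_mul d_cm a b c0)
  (top1l HG d_e) (top1r HG d)
  (fun a => proj2 (op_inv_spec HG d_e d_mul d_cm a))
  (fun a => proj1 (op_inv_spec HG d_e d_mul d_cm a))
  (brace_cd HG c_e c_mul c_cm cross).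
by [].
Qed.
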